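(* For every $n\ge1$ and every lattice congruence $R$ of the weak order on $S_n$, every vertex of the quotient graph $Q_R$ has degree at most $2n-\lceil 2\sqrt n\,\rceil$. Moreover, for every $n\ge1$ there is a lattice congruence $R$ of the weak order on $S_n$ such that $Q_R$ has a vertex of degree exactly $2n-\lceil2\sqrt n\,\rceil$.
   Context: $S_n$ is the set of permutations of $[n]$ with the weak order: $\pi\le\rho$ iff $\mathrm{inv}(\pi)\subseteq\mathrm{inv}(\rho)$, where $\mathrm{inv}(a_1\cdots a_n)=\{(a_i,a_j):i<j,\ a_i>a_j\}$. A lattice congruence is an equivalence relation compatible with joins and meets. The quotient graph $Q_R$ is the undirected cover graph of the lattice quotient $S_n/R$, whose elements are the classes, ordered by $X<Y$ iff $x<y$ for some $x\in X$, $y\in Y$. *)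

(* Defs.v *)
From mathcomp Require Import all_boot all_fingroup.
Set Implicit Arguments. Unset Strict Implicit. Unset Printing Implicit Defensive.

(* Permutations of [n] are {perm 'I_n}; one-line notation a_i = s i. *)
Definition inv_set (n : nat) (s : {perm 'I_n}) : {set 'I_n * 'I_n} :=
  [set p : 'I_n * 'I_n | [exists i : 'I_n, exists j : 'I_n,
     [&& (i < j)%N, (s j < s i)%N & p == (s i, s j)]]].

Definition weak_le n (s t : {perm 'I_n}) : bool := inv_set s \subset inv_set t.
Definition weak_lt n (s t : {perm 'I_n}) : bool := (s != t) && weak_le s t.

Definition is_join n (x y j : {perm 'I_n}) : Prop :=
  [/\ weak_le x j, weak_le y j &
      forall u, weak_le x u -> weak_le y u -> weak_le j u].
Definition is_meet n (x y m : {perm 'I_n}) : Prop :=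
  [/\ weak_le m x, weak_le m y &
      forall u, weak_le u x -> weak_le u y -> weak_le u m].

Definition lattice_congruence n (R : rel {perm 'I_n}) : Prop :=
  [/\ reflexive R, symmetric R, transitive R,
      (forall x y z jx jy, R x y -> is_join x z jx -> is_join y z jy -> R jx jy) &
      (forall x y z mx my, R x y -> is_meet x z mx -> is_meet y z my -> R mx my)].

Definition cls n (R : rel {perm 'I_n}) (x : {perm 'I_n}) : {set {perm 'I_n}} :=
  [set y | R x y].
Definition is_class n (R : rel {perm 'I_n}) (X : {set {perm 'I_n}}) : bool :=
  [exists x, X == cls R x].

Definition qlt n (X Y : {set {perm 'I_n}}) : bool :=
  (X != Y) && [exists x in X, exists y in Y, weak_lt x y].

Definition qcover n (R : rel {perm 'I_n}) (X Y : {set {perm 'I_n}}) : bool :=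
  [&& is_class R X, is_class R Y, qlt X Y &
      ~~ [exists Z, [&& is_class R Z, qlt X Z & qlt Z Y]]].

Definition qdeg n (R : rel {perm 'I_n}) (X : {set {perm 'I_n}}) : nat :=
  #|[set Y | qcover R X Y || qcover R Y X]|.

(* ceil (2 sqrt n) = least k with 4n <= k^2 *)
Lemma ceil2sqrt_ex (n : nat) : exists k, 4 * n <= k * k.
Proof.
exists (4 * n). case: n => [|n] //.
by rewrite leq_pmulr.
Qed.

Definition ceil_2sqrt (n : nat) : nat := ex_minn (ceil2sqrt_ex n).

(* Main.v *)
Set Warnings "-notation-overridden".
Require Import Defs.
From mathcomp Require Import all_boot all_fingroup zify.
Set Implicit Arguments. Unset Strict Implicit. Unset Printing Implicit Defensive.

Definition before n (s : {perm 'I_n}) (x y : 'I_n) : bool := (s^-1%g x < s^-1%g y)%N.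

Definition sto (T : finType) (L : rel T) : Prop :=
  [/\ irreflexive L, transitive L & forall x y, x != y -> L x y || L y x].

Lemma sto_asym (T : finType) (L : rel T) : sto L -> forall x y, L x y -> ~~ L y x.
Proof.
case=> irr tr _ x y lxy; apply/negP => lyx.
by have := tr _ _ _ lxy lyx; rewrite irr.
Qed.

Lemma sto_neq (T : finType) (L : rel T) : sto L -> forall x y, L x y -> x != y.
Proof. by case=> irr _ _ x y lxy; apply/eqP => exy; move: lxy; rewrite exy irr. Qed.

Lemma sto_before n (s : {perm 'I_n}) : sto (before s).
Proof.
split.
- by move=> x; rewrite /before ltnn.
- by move=> y x z; rewrite /before; apply: ltn_trans.
- move=> x y nxy; rewrite /before.
  case: (ltngtP (s^-1%g x) (s^-1%g y)) => // /val_inj /perm_inj exy.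
  by rewrite exy eqxx in nxy.
Qed.

Definition rk (T : finType) (B : rel T) (x : T) : nat := #|[pred w | B w x]|.

Lemma rk_lt (T : finType) (B : rel T) : sto B -> forall x y, (rk B x < rk B y) = B x y.
Proof.
move=> HB; have [irr tr tot] := HB.
have H1 : forall x y, B x y -> rk B x < rk B y.
  move=> x y bxy; apply: proper_card; apply/properP; split.
  - by apply/subsetP => w; rewrite !inE => bwx; apply: tr bxy.
  - by exists x; rewrite !inE // irr.
move=> x y; apply/idP/idP; last exact: H1.
move=> lt; case: (eqVneq x y) => [exy|nxy]; first by rewrite exy ltnn in lt.
case/orP: (tot _ _ nxy) => // byx.
by have := H1 _ _ byx; rewrite ltnNge (ltnW lt).
Qed.

Lemma rk_bound n (B : rel 'I_n) x : irreflexive B -> rk B x < n.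
Proof.
move=> irr; have := cardC [pred w | B w x]; rewrite card_ord /rk.
have : 0 < #|[predC [pred w | B w x]]|.
  by apply/card_gt0P; exists x; rewrite !inE irr.
move: #|[predC _]| => a; move: #|[pred w | B w x]| => b. lia.
Qed.

Definition fo n (B : rel 'I_n) (x : 'I_n) : 'I_n := insubd x (rk B x).

Lemma foE n (B : rel 'I_n) x : irreflexive B -> val (fo B x) = rk B x.
Proof. by move=> irr; rewrite /fo val_insubd rk_bound. Qed.

Lemma pofo_ex n (B : rel 'I_n) : sto B ->
  exists s : {perm 'I_n}, forall x y, before s x y = B x y.
Proof.
move=> HB; have [irr tr tot] := HB.
have inj : injective (fo B).
  move=> x y /(congr1 val); rewrite !foE // => e.
  case: (eqVneq x y) => // nxy.
  case/orP: (tot _ _ nxy).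
  - by rewrite -(rk_lt HB) e ltnn.
  - by rewrite -(rk_lt HB) e ltnn.
exists (perm inj)^-1%g => x y.
by rewrite /before invgK !permE !foE // rk_lt.
Qed.

Lemma card_lt_ord n k : k <= n -> #|[pred i : 'I_n | i < k]| = k.
Proof.
move=> kn.
have e : [pred i : 'I_n | i < k] =i [set widen_ord kn i | i in 'I_k].
  move=> i; rewrite !inE; apply/idP/imsetP.
  - by move=> ik; exists (Ordinal ik) => //; apply: val_inj.
  - by case=> j _ ->; rewrite /= ltn_ord.
by rewrite (eq_card e) card_imset ?card_ord //; by move=> i j /(congr1 val) => h; apply: val_inj.
Qed.

Lemma rk_before n (s : {perm 'I_n}) x : rk (before s) x = s^-1%g x.
Proof.
rewrite /rk -(card_lt_ord (ltnW (ltn_ord (s^-1%g x)))).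
have e : [pred w | before s w x] =i [set s i | i in [pred i : 'I_n | i < s^-1%g x]].
  move=> w; rewrite !inE /before; apply/idP/imsetP.
  - by move=> h; exists (s^-1%g w); rewrite ?permKV // inE.
  - by case=> i; rewrite inE => h ->; rewrite permK.
by rewrite (eq_card e) card_imset //; apply: perm_inj.
Qed.

Lemma before_inj n (s t : {perm 'I_n}) : (forall x y, before s x y = before t x y) -> s = t.
Proof.
move=> e; apply: invg_inj; apply/permP => x; apply: val_inj => /=.
by rewrite -!rk_before; apply: eq_card => w; rewrite !inE e.
Qed.

Lemma before_cotrans n (s : {perm 'I_n}) u v w :
  before s u w -> before s u v || before s v w.
Proof. rewrite /before => h; case: (ltnP (s^-1%g u) (s^-1%g v)) => //= h'; lia. Qed.

Lemma beforeE n (s : {perm 'I_n}) x y : before s x y = (s^-1%g x < s^-1%g y)%N.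
Proof. by []. Qed.

#[global] Opaque before.

Definition wleb n (L : rel 'I_n) (s t : {perm 'I_n}) : bool :=
  [forall x, forall y, L x y ==> before s x y ==> before t x y].

Lemma wlebP n (L : rel 'I_n) s t :
  reflect (forall x y, L x y -> before s x y -> before t x y) (wleb L s t).
Proof.
apply: (iffP forallP) => [h x y lxy bxy | h x].
- by move/forallP/(_ y): (h x); rewrite lxy bxy.
- by apply/forallP => y; apply/implyP => lxy; apply/implyP; apply: h.
Qed.

Definition Lgt n : rel 'I_n := fun x y => (y < x)%N.
Definition Llt n : rel 'I_n := fun x y => (x < y)%N.

Lemma sto_Lgt n : sto (@Lgt n).
Proof.
split; rewrite /Lgt.
- by move=> x; rewrite ltnn.
- by move=> y x z h1 h2; apply: ltn_trans h2 h1.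
- by move=> x y; rewrite -val_eqE /=; case: ltngtP.
Qed.

Lemma sto_Llt n : sto (@Llt n).
Proof.
split; rewrite /Llt.
- by move=> x; rewrite ltnn.
- by move=> y x z h1 h2; apply: ltn_trans h1 h2.
- by move=> x y; rewrite -val_eqE /=; case: ltngtP.
Qed.

Lemma before_neq n (s : {perm 'I_n}) x y : before s x y -> x != y.
Proof. exact: (sto_neq (sto_before s)). Qed.

Lemma before_nsym n (s : {perm 'I_n}) x y : x != y -> before s x y = ~~ before s y x.
Proof.
move=> nxy; have [irr tr tot] := sto_before s.
apply/idP/idP; first exact: sto_asym (sto_before s) _ _.
by move=> h; case/orP: (tot _ _ nxy) => // h'; rewrite h' in h.
Qed.


Lemma inv_setE n (s : {perm 'I_n}) :
  inv_set s = [set p : 'I_n * 'I_n | (p.2 < p.1)%N && before s p.1 p.2].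
Proof.
apply/setP => -[x y]; rewrite !inE /=; apply/existsP/idP.
- case=> i /existsP [j /and3P [ij sji /eqP [-> ->]]].
  by rewrite sji beforeE !permK.
- case/andP=> yx bxy; exists (s^-1%g x); apply/existsP; exists (s^-1%g y).
  by rewrite !permKV yx eqxx !andbT; exact: bxy.
Qed.

Lemma weak_leE n (s t : {perm 'I_n}) : weak_le s t = wleb (@Lgt n) s t.
Proof.
rewrite /weak_le !inv_setE; apply/subsetP/wlebP => h.
- move=> x y lxy bxy; have := h (x, y); rewrite /Lgt in lxy; rewrite !inE /= lxy bxy /=; exact.
- move=> [x y]; rewrite !inE /= => /andP [lxy bxy]; rewrite lxy /=; exact: h.
Qed.

Lemma wleb_flip n (L : rel 'I_n) s t : sto L ->
  wleb (fun x y => L y x) s t = wleb L t s.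
Proof.
move=> HL; apply/wlebP/wlebP => h x y lxy bxy.
- have nxy := sto_neq HL lxy.
  rewrite (before_nsym s nxy); apply/negP => b.
  by have := sto_asym (sto_before t) bxy; rewrite (h y x lxy b).
- have nxy := sto_neq HL lxy; rewrite eq_sym in nxy.
  rewrite (before_nsym t nxy); apply/negP => b.
  by have := sto_asym (sto_before s) bxy; rewrite (h y x lxy b).
Qed.

Lemma wleb_lt n (s t : {perm 'I_n}) : wleb (@Llt n) s t = weak_le t s.
Proof.
rewrite weak_leE; have := wleb_flip s t (@sto_Lgt n).
move=> <-; apply: eq_forallb => x; apply: eq_forallb => y; done.
Qed.

Lemma wleb_refl n (L : rel 'I_n) s : wleb L s s.
Proof. by apply/wlebP => x y _ h. Qed.

Lemma wleb_trans n (L : rel 'I_n) s t u : wleb L s t -> wleb L t u -> wleb L s u.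
Proof. by move=> /wlebP h1 /wlebP h2; apply/wlebP => x y l b; apply: h2 => //; apply: h1. Qed.

Definition linv n (L : rel 'I_n) (s : {perm 'I_n}) : {set 'I_n * 'I_n} :=
  [set p : 'I_n * 'I_n | L p.1 p.2 && before s p.1 p.2].

Lemma wleb_linv n (L : rel 'I_n) s t : wleb L s t = (linv L s \subset linv L t).
Proof.
apply/wlebP/subsetP => h.
- move=> [x y]; rewrite !inE /= => /andP [lxy bxy]; rewrite lxy /=; exact: h.
- move=> x y lxy bxy; have := h (x, y); rewrite !inE /= lxy bxy /=; exact.
Qed.

Lemma linv_inj n (L : rel 'I_n) s t : sto L -> linv L s = linv L t -> s = t.
Proof.
move=> HL e; have [irr tr tot] := HL.
have H : forall x y, L x y -> before s x y = before t x y.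
  move=> x y lxy; move/setP/(_ (x, y)): e; rewrite !inE /= lxy; move=> h; exact h.
apply: before_inj => x y; case: (eqVneq x y) => [->|nxy].
  by rewrite !beforeE !ltnn.
case/orP: (tot _ _ nxy) => l; first exact: H.
by rewrite (before_nsym s nxy) (before_nsym t nxy) (H y x l).
Qed.

Lemma wleb_antisym n (L : rel 'I_n) s t : sto L -> wleb L s t -> wleb L t s -> s = t.
Proof.
move=> HL; rewrite !wleb_linv => h1 h2; apply: (linv_inj HL).
by apply/eqP; rewrite eqEsubset h1 h2.
Qed.

Definition ljoin n (L : rel 'I_n) (x z j : {perm 'I_n}) : Prop :=
  [/\ wleb L x j, wleb L z j & forall u, wleb L x u -> wleb L z u -> wleb L j u].
Definition lmeet n (L : rel 'I_n) (x z m : {perm 'I_n}) : Prop :=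
  [/\ wleb L m x, wleb L m z & forall u, wleb L u x -> wleb L u z -> wleb L u m].

Lemma lmeet_flip n (L : rel 'I_n) x z m : sto L ->
  lmeet L x z m <-> ljoin (fun a b => L b a) x z m.
Proof.
move=> HL; have wF := fun a b => wleb_flip a b HL.
rewrite /lmeet /ljoin (wF x m) (wF z m).
split; case=> h1 h2 h3; split => // u.
- rewrite (wF x u) (wF z u) (wF m u); exact: h3.
- rewrite -(wF x u) -(wF z u) -(wF m u); exact: h3.
Qed.

Lemma is_joinE n (x z j : {perm 'I_n}) : is_join x z j <-> ljoin (@Lgt n) x z j.
Proof.
rewrite /is_join /ljoin !weak_leE.
split; case=> h1 h2 h3; split => // u.
- rewrite -!weak_leE; exact: h3.
- rewrite !weak_leE; exact: h3.
Qed.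

Lemma is_meetE n (x z m : {perm 'I_n}) : is_meet x z m <-> lmeet (@Lgt n) x z m.
Proof.
rewrite /is_meet /lmeet !weak_leE.
split; case=> h1 h2 h3; split => // u.
- rewrite -!weak_leE; exact: h3.
- rewrite !weak_leE; exact: h3.
Qed.

Lemma is_join_lt n (x z j : {perm 'I_n}) : is_join x z j <-> lmeet (@Llt n) x z j.
Proof.
rewrite /is_join /lmeet !wleb_lt.
split; case=> h1 h2 h3; split => // u.
- rewrite !wleb_lt; exact: h3.
- rewrite -!wleb_lt; exact: h3.
Qed.

Lemma is_meet_lt n (x z m : {perm 'I_n}) : is_meet x z m <-> ljoin (@Llt n) x z m.
Proof.
rewrite /is_meet /ljoin !wleb_lt.
split; case=> h1 h2 h3; split => // u.
- rewrite !wleb_lt; exact: h3.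
- rewrite -!wleb_lt; exact: h3.
Qed.

Definition eJ n (L : rel 'I_n) (x z : {perm 'I_n}) : rel 'I_n :=
  fun u v => L u v && (before x u v || before z u v).

Lemma path_L (T : finType) (L e : rel T) : transitive L -> (forall a b, e a b -> L a b) ->
  forall p u, path e u p -> u = last u p \/ L u (last u p).
Proof.
move=> tr he; elim=> [|y p IH] u /=; first by left.
case/andP=> euy py; right; case: (IH y py) => [<-|h]; first exact: he.
exact: tr (he _ _ euy) h.
Qed.

Lemma connect_L (T : finType) (L e : rel T) : transitive L -> (forall a b, e a b -> L a b) ->
  forall u v, connect e u v -> u = v \/ L u v.
Proof. by move=> tr he u v /connectP [p pp ->]; apply: path_L pp. Qed.

Lemma sto_flip (T : finType) (L : rel T) : sto L -> sto (fun a b => L b a).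
Proof.
case=> irr tr tot; split => //.
- by move=> y x z h1 h2; apply: tr h2 h1.
- by move=> x y nxy; rewrite orbC; apply: tot.
Qed.

Lemma eJ_cotrans n (L : rel 'I_n) x z : sto L -> forall p u, path (eJ L x z) u p ->
  forall v, L u v -> L v (last u p) ->
  connect (eJ L x z) u v || connect (eJ L x z) v (last u p).
Proof.
move=> HL; have [irr tr tot] := HL.
elim=> [|y p IH] u /=.
- by move=> _ v luv lvu; have := tr _ _ _ luv lvu; rewrite irr.
- case/andP=> euy py v luv lvl.
  case: (eqVneq v y) => [->|nvy]; first by rewrite connect1.
  case/orP: (tot _ _ nvy) => lvy.
  + have cyl := path_connect py (mem_last y p).
    move: (euy) => /andP [luy bxz].
    case/orP: bxz => b.
    * case/orP: (before_cotrans v b) => b'.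
      - by rewrite connect1 // /eJ luv b'.
      - apply/orP; right; apply: connect_trans cyl; apply: connect1.
        by rewrite /eJ lvy b'.
    * case/orP: (before_cotrans v b) => b'.
      - by rewrite connect1 // /eJ luv b' orbT.
      - apply/orP; right; apply: connect_trans cyl; apply: connect1.
        by rewrite /eJ lvy b' orbT.
  + case/orP: (IH y py v lvy lvl) => h.
    * by rewrite (connect_trans (connect1 euy) h).
    * by rewrite h orbT.
Qed.

Lemma S_cot n (L : rel 'I_n) x z : sto L -> forall u v w, L u v -> L v w ->
  connect (eJ L x z) u w -> connect (eJ L x z) u v || connect (eJ L x z) v w.
Proof.
move=> HL u v w luv lvw /connectP [p pp ew].
by have := eJ_cotrans HL pp luv; rewrite -ew; apply.
Qed.

Definition BJ n (L : rel 'I_n) x z : rel 'I_n := fun u v =>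
  if L u v then connect (eJ L x z) u v else (u != v) && ~~ connect (eJ L x z) v u.

Lemma sto_BJ n (L : rel 'I_n) x z : sto L -> sto (BJ L x z).
Proof.
move=> HL; have [irr tr tot] := HL.
set S := connect (eJ L x z).
have BL : forall u v, L u v -> BJ L x z u v = S u v by move=> u v h; rewrite /BJ h.
have BR : forall u v, L v u -> BJ L x z u v = ~~ S v u.
  move=> u v h; rewrite /BJ (negbTE (sto_asym HL h)).
  by rewrite eq_sym (sto_neq HL h).
have Btr : forall u v w, L u v -> L v w -> L u w by move=> u v w; apply: tr.
have Sc : forall u v w, L u v -> L v w -> S u w -> S u v || S v w := @S_cot n L x z HL.
have Str : forall u v w, S u v -> S v w -> S u w by move=> u v w; apply: connect_trans.
have irrB : irreflexive (BJ L x z) by move=> u; rewrite /BJ irr eqxx.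
have neqB : forall u v, BJ L x z u v -> u != v.
  by move=> u v h; apply/eqP => e; move: h; rewrite e irrB.
split => //.
- move=> v u w buv bvw.
  have nuv := neqB _ _ buv; have nvw := neqB _ _ bvw.
  case: (eqVneq u w) => [euw|nuw].
    rewrite -euw in bvw.
    case/orP: (tot _ _ nuv) => l.
    + by move: buv bvw; rewrite (BL _ _ l) (BR _ _ l) => ->.
    + by move: buv bvw; rewrite (BR _ _ l) (BL _ _ l) => /negbTE ->.
  case/orP: (tot _ _ nuv) => luv; case/orP: (tot _ _ nvw) => lvw;
    case/orP: (tot _ _ nuw) => luw.
  + move: buv bvw; rewrite (BL _ _ luv) (BL _ _ lvw) (BL _ _ luw); exact: Str.
  + by have := Btr _ _ _ (Btr _ _ _ luv lvw) luw; rewrite irr.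
  + move: buv bvw; rewrite (BL _ _ luv) (BR _ _ lvw) (BL _ _ luw) => s1 /negbTE s2.
    by have := Sc _ _ _ luw lvw s1; rewrite s2 orbF.
  + move: buv bvw; rewrite (BL _ _ luv) (BR _ _ lvw) (BR _ _ luw) => s1 /negP s2.
    by apply/negP => s3; apply: s2; apply: Str s3 s1.
  + move: buv bvw; rewrite (BR _ _ luv) (BL _ _ lvw) (BL _ _ luw) => /negbTE s1 s2.
    by have := Sc _ _ _ luv luw s2; rewrite s1.
  + move: buv bvw; rewrite (BR _ _ luv) (BL _ _ lvw) (BR _ _ luw) => /negP s1 s2.
    by apply/negP => s3; apply: s1; apply: Str s2 s3.
  + by have := Btr _ _ _ (Btr _ _ _ lvw luv) luw; rewrite irr.
  + move: buv bvw; rewrite (BR _ _ luv) (BR _ _ lvw) (BR _ _ luw) => /negbTE s1 /negbTE s2.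
    by apply/negP => s3; have := Sc _ _ _ lvw luv s3; rewrite s1 s2.
- move=> u v nuv; case/orP: (tot _ _ nuv) => l.
  + rewrite (BL _ _ l) (BR _ _ l); by case: (S u v).
  + rewrite (BR _ _ l) (BL _ _ l); by case: (S v u).
Qed.

Lemma join_ex n (L : rel 'I_n) x z : sto L -> exists j, ljoin L x z j /\
  forall u v, L u v -> before j u v = connect (eJ L x z) u v.
Proof.
move=> HL; have [j hj] := pofo_ex (sto_BJ x z HL).
have hjS : forall u v, L u v -> before j u v = connect (eJ L x z) u v.
  by move=> u v luv; rewrite hj /BJ luv.
exists j; split => //; split.
- apply/wlebP => u v luv bxu; rewrite hjS //; apply: connect1; by rewrite /eJ luv bxu.
- apply/wlebP => u v luv bxu; rewrite hjS //; apply: connect1; by rewrite /eJ luv bxu orbT.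
- move=> t /wlebP hx /wlebP hz; apply/wlebP => u v luv; rewrite hjS // => c.
  have [_ trt _] := sto_before t.
  have he : forall a b, eJ L x z a b -> before t a b.
    move=> a b /andP [lab /orP [b1|b1]]; [exact: hx | exact: hz].
  case: (connect_L trt he c) => // euv.
  by case: HL => irrL _ _; move: luv; rewrite euv irrL.
Qed.

Lemma join_char n (L : rel 'I_n) x z j : sto L -> ljoin L x z j ->
  forall u v, L u v -> before j u v = connect (eJ L x z) u v.
Proof.
move=> HL [h1 h2 h3]; have [j0 [[g1 g2 g3] hj0]] := join_ex x z HL.
have -> : j = j0 by apply: (wleb_antisym HL); [apply: h3 | apply: g3].
exact: hj0.
Qed.

Lemma meet_ex n (L : rel 'I_n) x z : sto L -> exists m, lmeet L x z m.
Proof.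
move=> HL; have [m [hm _]] := join_ex x z (sto_flip HL).
by exists m; apply/(lmeet_flip _ _ _ HL).
Qed.

Definition nxt n (i : 'I_n) : 'I_n := insubd i i.+1.

Lemma nxtV n (i : 'I_n) : i.+1 < n -> val (nxt i) = i.+1.
Proof. by move=> h; rewrite /nxt val_insubd h. Qed.

Lemma nxtE n (i : 'I_n) : i.+1 < n -> nat_of_ord (nxt i) = i.+1.
Proof. exact: nxtV. Qed.

Definition swp n (s : {perm 'I_n}) (i : 'I_n) : {perm 'I_n} := (tperm i (nxt i) * s)%g.

Lemma swp_inv n (s : {perm 'I_n}) i x : (swp s i)^-1%g x = tperm i (nxt i) (s^-1%g x).
Proof. by rewrite /swp invMg permM tpermV. Qed.

Lemma tpermEx (T : finType) (x y z : T) :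
  tperm x y z = if z == x then y else if z == y then x else z.
Proof.
case: tpermP => [->|->|/eqP/negbTE-> /eqP/negbTE->]; rewrite ?eqxx //.
by case: eqP => // ->.
Qed.

Lemma tperm_adj n (i j p q : 'I_n) : val j = i.+1 ->
  ~~ ((p == i) && (q == j)) -> ~~ ((p == j) && (q == i)) ->
  (tperm i j p < tperm i j q)%N = (p < q)%N.
Proof.
move=> ej; rewrite !tpermEx !(fun_if (@nat_of_ord n)) -!val_eqE /= ej.
by repeat (case: eqP => /= ?); lia.
Qed.

Lemma invE n (a : {perm 'I_n}) x i : (a^-1%g x == i) = (x == a i).
Proof. by apply/eqP/eqP => [<-|->]; rewrite ?permKV ?permK. Qed.

Lemma swp_before n (a : {perm 'I_n}) (i : 'I_n) x y : i.+1 < n ->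
  ~~ ((x == a i) && (y == a (nxt i))) -> ~~ ((x == a (nxt i)) && (y == a i)) ->
  before (swp a i) x y = before a x y.
Proof.
move=> hi h1 h2; rewrite !beforeE !swp_inv tperm_adj ?nxtV // !invE //.
Qed.

Lemma swp_before_i n (a : {perm 'I_n}) (i : 'I_n) : i.+1 < n ->
  before (swp a i) (a i) (a (nxt i)) = false.
Proof.
move=> hi; rewrite beforeE !swp_inv !permK tpermL tpermR.
by apply/negbTE; rewrite -leqNgt nxtE // leqnSn.
Qed.

Lemma before_i n (a : {perm 'I_n}) (i : 'I_n) : i.+1 < n -> before a (a i) (a (nxt i)).
Proof. by move=> hi; rewrite beforeE !permK nxtE. Qed.

Definition ldesc n (L : rel 'I_n) (a : {perm 'I_n}) : {set 'I_n} :=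
  [set i : 'I_n | (i.+1 < n) && L (a i) (a (nxt i))].

Lemma swp_le n (L : rel 'I_n) (a : {perm 'I_n}) i : sto L -> i \in ldesc L a ->
  wleb L (swp a i) a.
Proof.
move=> HL; rewrite inE => /andP [hi li].
apply/wlebP => x y lxy bxy.
case: (boolP ((x == a i) && (y == a (nxt i)))) => [/andP [/eqP ex /eqP ey]|h1].
  by move: bxy; rewrite ex ey swp_before_i.
case: (boolP ((x == a (nxt i)) && (y == a i))) => [/andP [/eqP ex /eqP ey]|h2].
  by move: lxy; rewrite ex ey (negbTE (sto_asym HL li)).
by rewrite -(swp_before hi h1 h2).
Qed.

Lemma swp_ge n (L : rel 'I_n) (m a : {perm 'I_n}) i : sto L -> i \in ldesc L a ->
  wleb L m a -> ~~ before m (a i) (a (nxt i)) -> wleb L m (swp a i).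
Proof.
move=> HL; rewrite inE => /andP [hi li] /wlebP hma nb.
apply/wlebP => x y lxy bxy.
case: (boolP ((x == a i) && (y == a (nxt i)))) => [/andP [/eqP ex /eqP ey]|h1].
  by move: bxy nb; rewrite ex ey => ->.
case: (boolP ((x == a (nxt i)) && (y == a i))) => [/andP [/eqP ex /eqP ey]|h2].
  by move: lxy; rewrite ex ey (negbTE (sto_asym HL li)).
by rewrite (swp_before hi h1 h2); apply: hma.
Qed.

Lemma swp_neq n (L : rel 'I_n) (a : {perm 'I_n}) i : i \in ldesc L a -> swp a i != a.
Proof.
rewrite inE => /andP [hi li]; apply/eqP => e.
by have := swp_before_i a hi; rewrite e before_i.
Qed.

Lemma cover_step n (L : rel 'I_n) (m a : {perm 'I_n}) : sto L -> wleb L m a ->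
  forall u v, L u v -> before a u v -> ~~ before m u v ->
  exists2 i, i \in ldesc L a & ~~ before m (a i) (a (nxt i)).
Proof.
move=> HL /wlebP hma; have [irr tr tot] := HL.
suff: forall d u v, a^-1%g v - a^-1%g u = d -> L u v -> before a u v -> ~~ before m u v ->
  exists2 i, i \in ldesc L a & ~~ before m (a i) (a (nxt i)).
  by move=> h u v; apply: h.
elim/ltn_ind => d IH u v ed luv bauv nbm.
have puv : (a^-1%g u < a^-1%g v)%N by rewrite -beforeE.
have hu1 : (a^-1%g u).+1 < n by apply: leq_ltn_trans (ltn_ord (a^-1%g v)).
set i := a^-1%g u.
have ai : a i = u by rewrite /i permKV.
have vn : val (nxt i) = (a^-1%g u).+1 by rewrite nxtV.
case: (eqVneq (val (nxt i)) (a^-1%g v)) => [env|nenv].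
  have env' : nxt i = a^-1%g v by apply: val_inj.
  exists i; first by rewrite inE hu1 ai env' permKV luv.
  by rewrite ai env' permKV.
set w := a (nxt i).
have pw : a^-1%g w = nxt i by rewrite /w permK.
have bauw : before a u w by rewrite beforeE pw -ai permK vn.
have bawv : before a w v by rewrite beforeE pw vn; move: puv nenv; rewrite vn; lia.
have nuw : u != w by apply: (before_neq bauw).
have nwv : w != v by apply: (before_neq bawv).
have d1 : a^-1%g w - a^-1%g u < d by rewrite pw vn -ed; lia.
have d2 : a^-1%g v - a^-1%g w < d by rewrite pw vn -ed; move: puv nenv; rewrite vn; lia.
have [_ trm _] := sto_before m.
case/orP: (tot _ _ nuw) => luw.
- case: (boolP (before m u w)) => bmuw; last exact: IH _ d1 _ _ erefl luw bauw bmuw.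
  case/orP: (tot _ _ nwv) => lwv.
  + case: (boolP (before m w v)) => bmwv; last exact: IH _ d2 _ _ erefl lwv bawv bmwv.
    by rewrite (trm _ _ _ bmuw bmwv) in nbm.
  + have nbmvw : ~~ before m v w.
      apply/negP => h; have := sto_asym (sto_before a) bawv.
      by rewrite (hma _ _ lwv h).
    have bmwv : before m w v by rewrite before_nsym.
    by rewrite (trm _ _ _ bmuw bmwv) in nbm.
- have lwv := tr _ _ _ luw luv.
  case: (boolP (before m w v)) => bmwv; last exact: IH _ d2 _ _ erefl lwv bawv bmwv.
  have nbmwu : ~~ before m w u.
    apply/negP => h; have := sto_asym (sto_before a) bauw.
    by rewrite (hma _ _ luw h).
  have bmuw : before m u w by rewrite before_nsym // eq_sym.
  by rewrite (trm _ _ _ bmuw bmwv) in nbm.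
Qed.

Definition qltL n (L : rel 'I_n) (X Y : {set {perm 'I_n}}) : bool :=
  (X != Y) && [exists x in X, exists y in Y, (x != y) && wleb L x y].
Definition qcoverL n (L : rel 'I_n) (R : rel {perm 'I_n}) (Y X : {set {perm 'I_n}}) : bool :=
  [&& is_class R Y, is_class R X, qltL L Y X &
      ~~ [exists Z, [&& is_class R Z, qltL L Y Z & qltL L Z X]]].

Lemma clsE n (R : rel {perm 'I_n}) x y : (y \in cls R x) = R x y.
Proof. by rewrite inE. Qed.

Lemma cls_eq n (R : rel {perm 'I_n}) x y : symmetric R -> transitive R -> R x y ->
  cls R x = cls R y.
Proof.
move=> sy tr rxy; apply/setP => z; rewrite !in_set; apply/idP/idP => h.
- by apply: tr h; rewrite sy.
- exact: tr rxy h.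
Qed.

Lemma class_mem n (R : rel {perm 'I_n}) X y : symmetric R -> transitive R ->
  is_class R X -> y \in X -> X = cls R y.
Proof.
move=> sy tr /existsP [x /eqP ->]; rewrite in_set => rxy.
exact: cls_eq.
Qed.

Lemma cls_class n (R : rel {perm 'I_n}) x : is_class R (cls R x).
Proof. by apply/existsP; exists x. Qed.

Lemma lmeet_refl n (L : rel 'I_n) a : lmeet L a a a.
Proof. by split; rewrite ?wleb_refl. Qed.

Lemma lmeet_le n (L : rel 'I_n) x y : wleb L y x -> lmeet L x y y.
Proof. by split; rewrite ?wleb_refl. Qed.

Lemma side n (L : rel 'I_n) (R : rel {perm 'I_n}) : sto L ->
  reflexive R -> symmetric R -> transitive R ->
  (forall x y z mx my, R x y -> lmeet L x z mx -> lmeet L y z my -> R mx my) ->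
  forall X, is_class R X ->
  exists a, [/\ a \in X, (forall y, y \in X -> wleb L a y) &
   [set Y | qcoverL L R Y X] \subset [set cls R (swp a i) | i in ldesc L a]].
Proof.
move=> HL rf sy tr Hc X cX.
have [x0 ex0] : exists x0, X = cls R x0 by case/existsP: cX => x /eqP ->; exists x.
have x0X : x0 \in X by rewrite ex0 in_set rf.
case: (arg_minnP (fun a => #|linv L a|) x0X) => a aX0 amin.
have aX : a \in X := aX0.
have RX : forall y z, y \in X -> z \in X -> R y z.
  move=> y z; rewrite ex0 !in_set => h1 h2; apply: tr h2; by rewrite sy.
have Rx0a : R x0 a by move: aX; rewrite ex0 in_set.
have amin2 : forall y, y \in X -> wleb L a y.
  move=> y yX; have [m [m1 m2 m3]] := meet_ex y a HL.
  have Ram : R a m := Hc _ _ _ _ _ (RX _ _ aX yX) (lmeet_refl L a) (And3 m1 m2 m3).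
  have mX : m \in X by rewrite ex0 in_set; exact: (tr _ _ _ Rx0a Ram).
  have sub : linv L m \subset linv L a by rewrite -wleb_linv.
  have e : linv L m = linv L a.
    apply/eqP; rewrite eqEcard sub /=; exact: amin _ mX.
  apply: (wleb_trans _ m1); by rewrite wleb_linv e.
exists a; split => //.
apply/subsetP => Y; rewrite inE => /and4P [cY _ qYX ncov].
case/andP: qYX => nYX /existsP [y /andP [yY /existsP [x /andP [xX /andP [nyx lyx]]]]].
have eY := class_mem sy tr cY yY.
have [m [m1 m2 m3]] := meet_ex a y HL.
have Rym : R y m := Hc _ _ _ _ _ (RX _ _ xX aX) (lmeet_le lyx) (And3 m1 m2 m3).
have mY : m \in Y by rewrite eY in_set.
have eX := class_mem sy tr cX aX.
have nlinv : linv L m != linv L a.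
  apply/negP => /eqP e; have ema := linv_inj HL e.
  move: nYX; rewrite eY eX (cls_eq sy tr Rym) ema eqxx //.
have sub : linv L m \subset linv L a by rewrite -wleb_linv.
have [[u v] pa pm] : exists2 p, p \in linv L a & p \notin linv L m.
  apply/exists_inP; rewrite -negb_forall_in; apply/negP => /forall_inP h.
  move/negP: nlinv; apply; rewrite eqEsubset sub; apply/subsetP => p pa.
  exact: h.
move: pa pm; rewrite !inE /= => /andP [luv bauv]; rewrite luv /= => nbm.
have [i iD nbmi] := cover_step HL m1 luv bauv nbm.
apply/imsetP; exists i => //.
set c := swp a i.
have mc : wleb L m c by apply: swp_ge.
have ca : wleb L c a by apply: swp_le.
have hi : i.+1 < n by move: iD; rewrite inE => /andP [].
have nca : c != a by apply: swp_neq iD.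
apply/eqP; apply: contraT => nYc.
case/negP: ncov; apply/existsP; exists (cls R c).
rewrite cls_class /=; apply/andP; split.
- rewrite /qltL nYc /=; apply/existsP; exists m; rewrite mY /=.
  apply/existsP; exists c; rewrite in_set rf mc andbT /=.
  apply/negP => /eqP emc; move/negP: nYc; apply; by rewrite eY (cls_eq sy tr Rym) emc.
- rewrite /qltL; apply/andP; split.
  + apply/negP => /eqP ecX.
    have cX' : c \in X by rewrite -ecX in_set rf.
    move: iD; rewrite inE => /andP [_ li].
    have := amin2 _ cX' => /wlebP/(_ _ _ li (before_i a hi)).
    by rewrite swp_before_i.
  + apply/existsP; exists c; rewrite in_set rf /=; apply/existsP; exists a.
    by rewrite aX nca ca.
Qed.

Lemma qltE n (X Y : {set {perm 'I_n}}) : qlt X Y = qltL (@Lgt n) X Y.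
Proof.
rewrite /qlt /qltL; congr (_ && _); apply: eq_existsb => x; congr (_ && _).
apply: eq_existsb => y; congr (_ && _); by rewrite /weak_lt weak_leE.
Qed.

Lemma qltE' n (X Y : {set {perm 'I_n}}) : qlt X Y = qltL (@Llt n) Y X.
Proof.
rewrite /qlt /qltL eq_sym; congr (_ && _).
apply/existsP/existsP => [[x /andP [xX /existsP [y /andP [yY /andP [nxy l]]]]] |
  [y /andP [yY /existsP [x /andP [xX /andP [nxy l]]]]]].
- exists y; rewrite yY /=; apply/existsP; exists x; rewrite xX eq_sym nxy /=.
  by rewrite wleb_lt.
- exists x; rewrite xX /=; apply/existsP; exists y; rewrite yY /weak_lt eq_sym nxy /=.
  by rewrite -wleb_lt.
Qed.

Lemma qcoverE n (R : rel {perm 'I_n}) X Y : qcover R Y X = qcoverL (@Lgt n) R Y X.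
Proof.
rewrite /qcover /qcoverL qltE; congr (_ && (_ && (_ && ~~ _))).
apply: eq_existsb => Z; by rewrite !qltE.
Qed.

Lemma qcoverE' n (R : rel {perm 'I_n}) X Y : qcover R X Y = qcoverL (@Llt n) R Y X.
Proof.
rewrite /qcover /qcoverL qltE' andbCA; congr (_ && (_ && (_ && ~~ _))).
apply: eq_existsb => Z; rewrite !qltE'; congr (_ && _); exact: andbC.
Qed.

Lemma no_desc_run n (L : rel 'I_n) (s : {perm 'I_n}) : sto L -> forall (p q : 'I_n),
  (p < q)%N -> (forall i : 'I_n, (p <= i < q)%N -> i \notin ldesc L s) -> L (s q) (s p).
Proof.
move=> HL; have [irr tr tot] := HL.
have step : forall i : 'I_n, i.+1 < n -> i \notin ldesc L s -> L (s (nxt i)) (s i).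
  move=> i hi; rewrite inE hi /= => nl.
  have ne : s i != s (nxt i).
    by rewrite (inj_eq perm_inj) -val_eqE nxtV // neq_ltn ltnSn.
  by case/orP: (tot _ _ ne) => // h; rewrite h in nl.
move=> p q; move: {2}(q - p) (erefl (q - p)) => k; elim: k q => [|k IH] q ek pq hq.
  by move: ek pq; lia.
have hp1 : p.+1 < n by apply: leq_ltn_trans (ltn_ord q); lia.
case: (eqVneq (val q) p.+1) => [eq1|ne1].
  have -> : q = nxt p by apply: val_inj; rewrite nxtV.
  by apply: step => //; apply: hq; move: eq1 => /= eq1; rewrite leqnn eq1 ltnSn.
have hq1 : (q.-1 < n)%N by apply: leq_ltn_trans (leq_pred _) (ltn_ord q).
set q' := Ordinal hq1.
have q0 : 0 < q by apply: leq_ltn_trans pq.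
have eq' : q = nxt q' by apply: val_inj; rewrite nxtV /= ?prednK.
have ne2 : nat_of_ord q <> p.+1 by move/eqP: ne1.
have l1 : L (s q') (s p).
  apply: IH => /=.
  - lia.
  - lia.
  - by move=> i /andP [h1 h2]; apply: hq; rewrite h1 /=; lia.
rewrite eq'; apply: (tr (s q')) _ l1; apply: step; rewrite /= ?prednK //.
by apply: hq; rewrite /=; lia.
Qed.

Lemma cnt_eq n (S : {set 'I_n}) (p q : nat) : (p <= q)%N ->
  #|[set i in S | (i < p)%N]| = #|[set i in S | (i < q)%N]| ->
  forall i, i \in S -> ~~ (p <= i < q)%N.
Proof.
move=> pq e i iS; apply/negP => /andP [h1 h2].
have sub : [set i in S | (i < p)%N] \subset [set i in S | (i < q)%N].
  apply/subsetP => j; rewrite !inE => /andP [-> /= jp]; lia.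
have eqs : [set i in S | (i < p)%N] = [set i in S | (i < q)%N].
  by apply/eqP; rewrite eqEcard sub /= e.
have : i \in [set i in S | (i < q)%N] by rewrite inE iS h2.
by rewrite -eqs inE iS ltnNge h1.
Qed.

Definition cnt n (S : {set 'I_n}) (p : nat) := #|[set i in S | (i < p)%N]|.

Lemma cnt_le n (S : {set 'I_n}) p : cnt S p <= #|S|.
Proof. by apply: subset_leq_card; apply/subsetP => i; rewrite inE => /andP []. Qed.

Lemma key_ord n (a b : {perm 'I_n}) u v : wleb (@Lgt n) a b ->
  (a^-1%g u < a^-1%g v)%N ->
  cnt (ldesc (@Llt n) a) (a^-1%g u) = cnt (ldesc (@Llt n) a) (a^-1%g v) ->
  cnt (ldesc (@Lgt n) b) (b^-1%g u) = cnt (ldesc (@Lgt n) b) (b^-1%g v) -> False.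
Proof.
move=> /wlebP ab puv ea eb.
have h1 := cnt_eq (ltnW puv) ea.
have lvu : Llt (a (a^-1%g v)) (a (a^-1%g u)).
  apply: (no_desc_run (sto_Llt n)) => // i hi; apply/negP => iS.
  by have := h1 _ iS; rewrite hi.
rewrite !permKV /Llt in lvu.
have bab : before b u v by apply: ab; rewrite // beforeE.
have pb : (b^-1%g u < b^-1%g v)%N by rewrite -beforeE.
have h2 := cnt_eq (ltnW pb) eb.
have luv : Lgt (b (b^-1%g v)) (b (b^-1%g u)).
  apply: (no_desc_run (sto_Lgt n)) => // i hi; apply/negP => iS.
  by have := h2 _ iS; rewrite hi.
rewrite !permKV /Lgt in luv; lia.
Qed.

Lemma runs_bound n (a b : {perm 'I_n}) : wleb (@Lgt n) a b ->
  n <= (#|ldesc (@Llt n) a|).+1 * (#|ldesc (@Lgt n) b|).+1.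
Proof.
move=> ab; set A := #|ldesc (@Llt n) a|; set D := #|ldesc (@Lgt n) b|.
pose g (v : 'I_n) : 'I_A.+1 * 'I_D.+1 :=
  (inord (cnt (ldesc (@Llt n) a) (a^-1%g v)), inord (cnt (ldesc (@Lgt n) b) (b^-1%g v))).
have inj : injective g.
  move=> u v [] /(congr1 val) e1 /(congr1 val) e2.
  rewrite /= !inordK ?ltnS ?cnt_le // in e1 e2.
  case: (eqVneq u v) => // nuv.
  have : a^-1%g u != a^-1%g v by rewrite (inj_eq perm_inj).
  rewrite -val_eqE neq_ltn => /orP [h|h].
  - by case: (key_ord ab h e1 e2).
  - by case: (key_ord ab h (esym e1) (esym e2)).
by have := leq_card g inj; rewrite card_prod !card_ord.
Qed.

Lemma desc_asc n (a : {perm 'I_n}) : 1 <= n ->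
  #|ldesc (@Lgt n) a| + #|ldesc (@Llt n) a| <= n.-1.
Proof.
move=> n1.
have dis : [disjoint ldesc (@Lgt n) a & ldesc (@Llt n) a].
  apply/pred0P => i /=; rewrite !inE /Lgt /Llt; apply/negP => /andP [/andP [_ h1] /andP [_ h2]].
  lia.
have e := cardsU (ldesc (@Lgt n) a) (ldesc (@Llt n) a).
rewrite (disjoint_setI0 dis) cards0 subn0 in e; rewrite -e.
have sub : ldesc (@Lgt n) a :|: ldesc (@Llt n) a \subset [set i : 'I_n | i.+1 < n].
  by apply/subsetP => i; rewrite !inE => /orP [/andP [-> _]|/andP [-> _]].
apply: leq_trans (subset_leq_card sub) _.
have := cardC [set i : 'I_n | i.+1 < n]; rewrite card_ord.
have : 0 < #|[predC [set i : 'I_n | i.+1 < n]]|.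
  have h : n.-1 < n by rewrite ltn_predL.
  apply/card_gt0P; exists (Ordinal h); rewrite !inE /=; lia.
move: #|[predC _]| => x; move: #|[set _ | _]| => y; lia.
Qed.

Lemma ceil_le n A D : n <= A.+1 * D.+1 -> ceil_2sqrt n <= A + D + 2.
Proof.
move=> h; rewrite /ceil_2sqrt; case: ex_minnP => c _ cmin.
apply: cmin.
have : 4 * (A.+1 * D.+1) <= (A + D + 2) * (A + D + 2).
  case: (leqP A D) => hAD.
  - have [k ->] : exists k, D = A + k by exists (D - A); lia.
    nia.
  - have [k ->] : exists k, A = D + k by exists (A - D); lia.
    nia.
lia.
Qed.

Lemma part1 n (hn : 1 <= n) (R : rel {perm 'I_n}) : lattice_congruence R ->
  forall X, is_class R X -> qdeg R X <= 2 * n - ceil_2sqrt n.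
Proof.
case=> rf sy tr cj cm X cX.
have cmL : forall x y z mx my, R x y -> lmeet (@Lgt n) x z mx -> lmeet (@Lgt n) y z my -> R mx my.
  by move=> x y z mx my r /is_meetE h1 /is_meetE h2; apply: cm r h1 h2.
have cjL : forall x y z mx my, R x y -> lmeet (@Llt n) x z mx -> lmeet (@Llt n) y z my -> R mx my.
  by move=> x y z mx my r /is_join_lt h1 /is_join_lt h2; apply: cj r h1 h2.
have [a [aX amin sa]] := side (sto_Lgt n) rf sy tr cmL cX.
have [b [bX bmin sb]] := side (sto_Llt n) rf sy tr cjL cX.
have ab := amin b bX.
have e : [set Y | qcover R X Y || qcover R Y X] =
   [set Y | qcoverL (@Llt n) R Y X] :|: [set Y | qcoverL (@Lgt n) R Y X].
  by apply/setP => Y; rewrite !inE (qcoverE' R X Y) (qcoverE R X Y).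
have hdeg : qdeg R X <= #|ldesc (@Llt n) b| + #|ldesc (@Lgt n) a|.
  rewrite /qdeg e; apply: leq_trans (leq_card_setU _ _) _.
  apply: leq_add.
  - exact: leq_trans (subset_leq_card sb) (leq_imset_card _ _).
  - exact: leq_trans (subset_leq_card sa) (leq_imset_card _ _).
have h1 := runs_bound ab.
have h2 := desc_asc a hn.
have h3 := desc_asc b hn.
have h4 := ceil_le h1.
lia.
Qed.

Lemma path_window n (L T : rel 'I_n) (x y z : {perm 'I_n}) : sto L -> reflexive T ->
  (forall u v w, T u w -> L u v -> L v w -> T u v && T v w) ->
  (forall a b, T a b -> L a b -> before x a b = before y a b) ->
  forall p u, path (eJ L x z) u p -> T u (last u p) -> path (eJ L y z) u p.
Proof.
move=> HL rT cvx hxy; have [irr tr tot] := HL.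
have he : forall a b, eJ L x z a b -> L a b by move=> a b /andP [].
elim=> [|y0 p IH] u //= /andP [e1 pp] Tul.
have luy : L u y0 by case/andP: e1.
have /andP [T1 T2] : T u y0 && T y0 (last y0 p).
  case: (path_L tr he pp) => [ey|h].
  - by rewrite -ey in Tul *; rewrite Tul rT.
  - exact: cvx Tul luy h.
rewrite (IH _ pp T2) andbT /eJ luy /=.
by move: e1; rewrite /eJ luy (hxy _ _ T1 luy).
Qed.

Lemma join_window n (L T : rel 'I_n) (x y z jx jy : {perm 'I_n}) : sto L -> reflexive T ->
  (forall u v w, T u w -> L u v -> L v w -> T u v && T v w) ->
  (forall a b, T a b -> L a b -> before x a b = before y a b) ->
  ljoin L x z jx -> ljoin L y z jy ->
  forall a b, T a b -> L a b -> before jx a b = before jy a b.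
Proof.
move=> HL rT cvx hxy hjx hjy a b Tab lab.
rewrite (join_char HL hjx lab) (join_char HL hjy lab).
have hyx : forall a b, T a b -> L a b -> before y a b = before x a b.
  by move=> ? ? ? ?; rewrite hxy.
apply/connectP/connectP => -[p pp eb]; exists p => //.
- by apply: (path_window HL rT cvx hxy pp); rewrite -eb.
- by apply: (path_window HL rT cvx hyx pp); rewrite -eb.
Qed.

Definition Tq n (q : nat) : rel 'I_n := fun u v => (u <= v + q) && (v <= u + q).
Definition fk n (q : nat) (x : {perm 'I_n}) : {set 'I_n * 'I_n} :=
  inv_set x :&: [set pr : 'I_n * 'I_n | Tq q pr.1 pr.2].
Definition Rk n (q : nat) : rel {perm 'I_n} := fun x y => fk q x == fk q y.

Lemma fk_mem n q (x : {perm 'I_n}) a b :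
  ((a, b) \in fk q x) = [&& (b < a)%N, before x a b & Tq q a b].
Proof. by rewrite /fk inv_setE !inE /= andbA. Qed.

Lemma fk_before n q (x y : {perm 'I_n}) : fk q x = fk q y ->
  forall a b, Tq q a b -> before x a b = before y a b.
Proof.
move=> e a b Tab; case: (ltngtP a b) => h.
- have nab : a != b by rewrite -val_eqE /= neq_ltn h.
  rewrite (before_nsym x nab) (before_nsym y nab); congr (~~ _).
  have Tba : Tq q b a by move: Tab; rewrite /Tq andbC.
  by move/setP/(_ (b, a)): e; rewrite !fk_mem h Tba /= !andbT => ->.
- by move/setP/(_ (a, b)): e; rewrite !fk_mem h Tab /= !andbT => ->.
- have eab : a = b by apply: val_inj.
  by rewrite eab !beforeE !ltnn.
Qed.

Lemma fk_of_before n q (x y : {perm 'I_n}) :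
  (forall a b, Tq q a b -> (b < a)%N -> before x a b = before y a b) -> fk q x = fk q y.
Proof.
move=> h; apply/setP => -[a b]; rewrite !fk_mem.
case: (boolP (b < a)%N) => //= ba; case: (boolP (Tq q a b)) => Tab; rewrite ?andbF ?andbT //.
exact: h.
Qed.

Lemma Rk_cong n q : lattice_congruence (@Rk n q).
Proof.
have rT : reflexive (@Tq n q) by move=> u; rewrite /Tq; apply/andP; split; lia.
split.
- by move=> x; rewrite /Rk.
- by move=> x y; rewrite /Rk eq_sym.
- by move=> y x z /eqP h1 /eqP h2; rewrite /Rk h1 h2.
- move=> x y z jx jy /eqP rxy /is_joinE hx /is_joinE hy; apply/eqP.
  apply: fk_of_before => a b Tab ba.
  apply: (join_window (sto_Lgt n) rT _ _ hx hy) => //.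
  + by move=> u v w; rewrite /Tq /Lgt => /andP [h1 h2] h3 h4; apply/andP; split; apply/andP; split; lia.
  + by move=> a0 b0 T0 _; exact: (fk_before rxy T0).
- move=> x y z mx my /eqP rxy /is_meet_lt hx /is_meet_lt hy; apply/eqP.
  apply: fk_of_before => a b Tab ba.
  have nab : a != b by rewrite -val_eqE /= neq_ltn ba orbT.
  rewrite (before_nsym mx nab) (before_nsym my nab); congr (~~ _).
  apply: (join_window (sto_Llt n) rT _ _ hx hy) => //.
  + by move=> u v w; rewrite /Tq /Llt => /andP [h1 h2] h3 h4; apply/andP; split; apply/andP; split; lia.
  + by move=> a0 b0 T0 _; exact: (fk_before rxy T0).
  + by move: Tab; rewrite /Tq andbC.
Qed.

Lemma N1 q x y : 0 < q -> y < x -> x <= y + q -> (x %/ q == y %/ q) = (y %% q < x %% q).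
Proof.
move=> q0 yx xyq.
have ex := divn_eq x q; have ey := divn_eq y q.
have rx := ltn_pmod x q0; have ry := ltn_pmod y q0.
have le : y %/ q <= x %/ q by apply: leq_div2r; lia.
move: (x %/ q) (y %/ q) (x %% q) (y %% q) ex ey rx ry le => X Y a b ex ey rx ry le.
case: (eqVneq X Y) => [eXY|ne] /=; first (subst; lia).
have : Y.+1 <= X by lia.
move=> h; have : Y.+1 * q <= X * q by apply: leq_mul.
lia.
Qed.

Lemma N2 q u : (u %% q).+1 < q -> u.+1 %/ q = u %/ q /\ u.+1 %% q = (u %% q).+1.
Proof.
move=> h; have q0 : 0 < q by lia.
have e : u.+1 = u %/ q * q + (u %% q).+1 by rewrite {1}(divn_eq u q) addnS.
split; rewrite e.
- by rewrite divnMDl // (divn_small h) addn0.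
- by rewrite modnMDl modn_small.
Qed.

Lemma N4 q v w : 0 < q -> w %% q = v %% q -> v < w -> w < v + q -> False.
Proof.
move=> q0 e vw wv.
have ew := divn_eq w q; have ev := divn_eq v q.
have le : v %/ q <= w %/ q by apply: leq_div2r; lia.
move: (w %/ q) (v %/ q) (w %% q) (v %% q) ew ev e le => W V a b ew ev e le.
case: (eqVneq W V) => [eWV|ne]; first lia.
have : V.+1 * q <= W * q by apply: leq_mul; lia.
lia.
Qed.

Definition Ba n q : rel 'I_n := fun u v => (u %/ q < v %/ q) || ((u %/ q == v %/ q) && (v < u)).
Definition Bb n q : rel 'I_n := fun u v => (v %% q < u %% q) || ((u %% q == v %% q) && (u < v)).

Lemma sto_Ba n q : sto (@Ba n q).
Proof.
split; rewrite /Ba.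
- by move=> u; rewrite ltnn eqxx ltnn.
- move=> v u w; move: (u %/ q) (v %/ q) (w %/ q) => U V W.
  move: (nat_of_ord u) (nat_of_ord v) (nat_of_ord w) => x y z.
  case: (ltngtP U V); case: (ltngtP V W); case: (ltngtP U W) => //=; lia.
- move=> u v; rewrite -val_eqE /=; move: (u %/ q) (v %/ q) => U V.
  move: (nat_of_ord u) (nat_of_ord v) => x y.
  case: (ltngtP U V) => //=; case: (ltngtP x y) => //=; lia.
Qed.

Lemma sto_Bb n q : sto (@Bb n q).
Proof.
split; rewrite /Bb.
- by move=> u; rewrite ltnn eqxx ltnn.
- move=> v u w; move: (u %% q) (v %% q) (w %% q) => U V W.
  move: (nat_of_ord u) (nat_of_ord v) (nat_of_ord w) => x y z.
  case: (ltngtP U V); case: (ltngtP V W); case: (ltngtP U W) => //=; lia.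
- move=> u v; rewrite -val_eqE /=; move: (u %% q) (v %% q) => U V.
  move: (nat_of_ord u) (nat_of_ord v) => x y.
  case: (ltngtP U V) => //=; case: (ltngtP x y) => //=; lia.
Qed.

Lemma adj_pos n (s : {perm 'I_n}) x y : before s x y ->
  (forall w, ~~ (before s x w && before s w y)) ->
  (s^-1%g x).+1 < n /\ s (nxt (s^-1%g x)) = y.
Proof.
move=> bxy adj.
have pxy : (s^-1%g x < s^-1%g y)%N by rewrite -beforeE.
have h1 : (s^-1%g x).+1 < n by apply: leq_ltn_trans (ltn_ord (s^-1%g y)).
split => //.
case: (eqVneq (s^-1%g y : nat) (s^-1%g x).+1) => [e|ne].
  have -> : nxt (s^-1%g x) = s^-1%g y by apply: val_inj; rewrite nxtV.
  by rewrite permKV.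
have ne' : (s^-1%g y : nat) <> (s^-1%g x).+1 by move/eqP: ne.
set w := s (nxt (s^-1%g x)).
have pw : s^-1%g w = nxt (s^-1%g x) by rewrite /w permK.
have := adj w; rewrite !beforeE pw nxtE //.
have -> : ((s^-1%g x < (s^-1%g x).+1)%N) = true by rewrite ltnSn.
move=> /= h; exfalso; move: h; rewrite -leqNgt; lia.
Qed.

Lemma swp_f n (q : nat) (a : {perm 'I_n}) (i : 'I_n) : i.+1 < n -> (a (nxt i) < a i)%N ->
  fk q (swp a i) = fk q a :\ (a i, a (nxt i)).
Proof.
move=> hi lt; apply/setP => -[x y]; rewrite in_setD1 !fk_mem.
case: (eqVneq (x, y) (a i, a (nxt i))) => [[-> ->]|ne].
  by rewrite swp_before_i // andbF.
case: (boolP ((x == a (nxt i)) && (y == a i))) => [/andP [/eqP -> /eqP ->]|h2].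
  by rewrite /= ltnNge (ltnW lt).
have h1 : ~~ ((x == a i) && (y == a (nxt i))).
  by apply: contra ne => /andP [/eqP -> /eqP ->].
by rewrite (swp_before hi h1 h2).
Qed.

Lemma swp_f_up n (q : nat) (b : {perm 'I_n}) (j : 'I_n) : j.+1 < n -> (b j < b (nxt j))%N ->
  Tq q (b (nxt j)) (b j) -> fk q (swp b j) = (b (nxt j), b j) |: fk q b.
Proof.
move=> hj lt T; apply/setP => -[x y]; rewrite in_setU1 !fk_mem.
case: (eqVneq (x, y) (b (nxt j), b j)) => [[-> ->]|ne] /=.
  have nn : b (nxt j) != b j.
    by rewrite -val_eqE /= neq_ltn lt orbT.
  by rewrite lt T (before_nsym _ nn) swp_before_i.
case: (boolP ((x == b j) && (y == b (nxt j)))) => [/andP [/eqP -> /eqP ->]|h1].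
  by rewrite ltnNge (ltnW lt).
have h2 : ~~ ((x == b (nxt j)) && (y == b j)).
  by apply: contra ne => /andP [/eqP -> /eqP ->].
by rewrite (swp_before hj h1 h2).
Qed.

Lemma fk_mono n (q : nat) (x y : {perm 'I_n}) : weak_le x y -> fk q x \subset fk q y.
Proof. by move=> h; apply: setSI. Qed.

Lemma cls_Rk n (q : nat) (x y : {perm 'I_n}) : cls (@Rk n q) x = cls (@Rk n q) y -> fk q x = fk q y.
Proof.
move=> e; have : y \in cls (@Rk n q) x by rewrite e in_set /Rk.
by rewrite in_set => /eqP.
Qed.

Lemma qlt_card n (q : nat) (x y : {perm 'I_n}) :
  qlt (cls (@Rk n q) x) (cls (@Rk n q) y) -> #|fk q x| < #|fk q y|.
Proof.
case/andP=> ne /existsP [x' /andP [x'X /existsP [y' /andP [y'Y /andP [_ le]]]]].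
move: x'X y'Y; rewrite !in_set /Rk => /eqP ex /eqP ey.
have sub := fk_mono q le; rewrite -ex -ey in sub.
apply: proper_card; rewrite properEneq sub andbT.
apply: contra ne => /eqP e; apply/eqP; apply: cls_eq.
- by move=> u v; rewrite /Rk eq_sym.
- by move=> v u w /eqP h1 /eqP h2; rewrite /Rk h1 h2.
- by rewrite /Rk e.
Qed.

Lemma cover_of n (q : nat) (X Y : {set {perm 'I_n}}) x y :
  is_class (@Rk n q) X -> is_class (@Rk n q) Y -> x \in X -> y \in Y -> x != y ->
  weak_le x y -> #|fk q y| = (#|fk q x|).+1 -> qcover (@Rk n q) X Y.
Proof.
have sy : symmetric (@Rk n q) by move=> u v; rewrite /Rk eq_sym.
have tr : transitive (@Rk n q) by move=> v u w /eqP h1 /eqP h2; rewrite /Rk h1 h2.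
move=> cX cY xX yY nxy le ec.
have eX := class_mem sy tr cX xX; have eY := class_mem sy tr cY yY.
have qXY : qlt X Y.
  apply/andP; split.
    apply/negP => /eqP e; have := cls_Rk (etrans (esym eX) (etrans e eY)).
    by move=> e'; move: ec; rewrite e'; lia.
  by apply/existsP; exists x; rewrite xX /=; apply/existsP; exists y; rewrite yY /weak_lt nxy le.
rewrite /qcover cX cY qXY /=; apply/negP => /existsP [Z /and3P [cZ q1 q2]].
have [z ez] : exists z, Z = cls (@Rk n q) z by case/existsP: cZ => z /eqP ->; exists z.
rewrite eX ez in q1; rewrite eY ez in q2.
have := qlt_card q1; have := qlt_card q2; lia.
Qed.

Lemma cardV n q : n.+1 - q <= #|[set v : 'I_n.+1 | v + q < n.+1]|.
Proof.
set V := [set v : 'I_n.+1 | v + q < n.+1].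
have hc := cardsC V; rewrite card_ord in hc.
case: (leqP n.+1 q) => hq; first lia.
suff : #|~: V| <= q by lia.
pose g (v : 'I_n.+1) : 'I_n.+1 := inord (v + q - n.+1).
have inj : {in ~: V &, injective g}.
  move=> u v; rewrite !inE -!leqNgt => hu hv /(congr1 val).
  rewrite /g /= !inordK; last 2 first.
  - have := ltn_ord u; have := ltn_ord v; lia.
  - have := ltn_ord u; have := ltn_ord v; lia.
  move=> e; apply: val_inj => /=; lia.
rewrite -(card_in_imset inj).
apply: leq_trans (_ : #|[pred i : 'I_n.+1 | i < q]| <= q); last by rewrite card_lt_ord // ltnW.
apply: subset_leq_card; apply/subsetP => x /imsetP [v vV ->]; rewrite inE /g inordK.
- move: vV; rewrite !inE -leqNgt; have := ltn_ord v; lia.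
- have := ltn_ord v; lia.
Qed.

Lemma cardU n p q : 0 < q -> n.+1 <= p * q ->
  n.+1 - p <= #|[set u : 'I_n.+1 | (u.+1 < n.+1) && ((u %% q).+1 < q)]|.
Proof.
move=> q0 hpq.
set U := [set u : 'I_n.+1 | (u.+1 < n.+1) && ((u %% q).+1 < q)].
have hc := cardsC U; rewrite card_ord in hc.
case: (leqP n.+1 p) => hp; first lia.
suff : #|~: U| <= p by lia.
pose g (v : 'I_n.+1) : 'I_n.+1 := inord (v %/ q).
have aux : forall u v : 'I_n.+1, u \in ~: U -> (u < v)%N -> u %/ q = v %/ q -> False.
  move=> u v; rewrite !inE => hu uv e.
  have hu' : ~~ ((u %% q).+1 < q).
    by apply: contra hu => h; rewrite h andbT; apply: leq_ltn_trans (ltn_ord v).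
  have eu := divn_eq u q; have ev := divn_eq v q; have rv := ltn_pmod v q0.
  move: hu' eu ev rv; rewrite e; move: (v %/ q * q) (u %% q) (v %% q) => K a b.
  lia.
have inj : {in ~: U &, injective g}.
  move=> u v hu hv /(congr1 val).
  rewrite /g /= !inordK; last 2 first.
  - have := ltn_ord u; have := ltn_ord v; have := leq_div u q; have := leq_div v q; lia.
  - have := ltn_ord u; have := ltn_ord v; have := leq_div u q; have := leq_div v q; lia.
  move=> e; apply: val_inj => /=; case: (ltngtP u v) => // h.
  - by case: (aux _ _ hu h e).
  - by case: (aux _ _ hv h (esym e)).
rewrite -(card_in_imset inj).
apply: leq_trans (_ : #|[pred i : 'I_n.+1 | i < p]| <= p); last by rewrite card_lt_ord // ltnW.
apply: subset_leq_card; apply/subsetP => x /imsetP [v vV ->]; rewrite inE /g inordK.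
- by rewrite ltn_divLR // (leq_trans _ hpq) // ltn_ord.
- by apply: leq_ltn_trans (leq_div _ _) (ltn_ord v).
Qed.

Lemma part2_gen n p q : 0 < q -> n.+1 <= p * q ->
  exists2 X, is_class (@Rk n.+1 q) X & (n.+1 - p) + (n.+1 - q) <= qdeg (@Rk n.+1 q) X.
Proof.
move=> q0 hpq.
have [a ha] := pofo_ex (@sto_Ba n.+1 q).
have [b hb] := pofo_ex (@sto_Bb n.+1 q).
have sy : symmetric (@Rk n.+1 q) by move=> u v; rewrite /Rk eq_sym.
have tr : transitive (@Rk n.+1 q) by move=> v u w /eqP h1 /eqP h2; rewrite /Rk h1 h2.
have fab : fk q a = fk q b.
  apply: fk_of_before => x y Txy yx; rewrite ha hb /Ba /Bb.
  have h1 : (x %/ q < y %/ q) = false.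
    by apply/negbTE; rewrite -leqNgt leq_div2r // ltnW.
  rewrite h1 /= (ltnNge x y) (ltnW yx) andbF orbF yx andbT.
  by apply: N1 => //; case/andP: Txy.
set X := cls (@Rk n.+1 q) a.
have cX : is_class (@Rk n.+1 q) X by apply: cls_class.
have aX : a \in X by rewrite in_set /Rk.
have bX : b \in X by rewrite in_set /Rk fab.
set U := [set u : 'I_n.+1 | (u.+1 < n.+1) && ((u %% q).+1 < q)].
set V := [set v : 'I_n.+1 | v + q < n.+1].
pose c (u : 'I_n.+1) := swp a (a^-1%g (inord u.+1)).
pose d (v : 'I_n.+1) := swp b (b^-1%g v).
have Hc : forall u, u \in U -> [/\ fk q (c u) = fk q a :\ (inord u.+1, u),
     (inord u.+1, u) \in fk q a, weak_le (c u) a & c u != a].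
  move=> u; rewrite inE => /andP [hu1 hm].
  set u1 : 'I_n.+1 := inord u.+1.
  have vu1 : (u1 : nat) = u.+1 by rewrite inordK.
  have [e1 e2] := N2 hm.
  have bau : before a u1 u by rewrite ha /Ba vu1 e1 ltnn eqxx ltnSn orbT.
  have adj : forall w, ~~ (before a u1 w && before a w u).
    move=> w; rewrite !ha /Ba vu1 e1.
    move: (u %/ q) (w %/ q) (nat_of_ord w) => K W x.
    apply/negP => /andP [h1 h2]; move: h1 h2; case: (ltngtP K W) => //=; lia.
  have [hi ai] := adj_pos bau adj.
  have ai' : a (a^-1%g u1) = u1 by rewrite permKV.
  have lt : (a (nxt (a^-1%g u1)) < a (a^-1%g u1))%N by rewrite ai ai' vu1.
  have fc := swp_f q hi lt; rewrite ai ai' in fc.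
  have iD : a^-1%g u1 \in ldesc (@Lgt n.+1) a by rewrite inE hi /Lgt lt.
  split => //.
  - by rewrite fk_mem /= vu1 ltnSn bau /Tq vu1; apply/andP; split; lia.
  - by rewrite weak_leE; apply: swp_le (sto_Lgt _) iD.
  - exact: swp_neq iD.
have Hd : forall v, v \in V -> [/\ fk q (d v) = (inord (v + q), v) |: fk q b,
     (inord (v + q), v) \notin fk q b, weak_le b (d v) & d v != b].
  move=> v; rewrite inE => hv.
  set vq : 'I_n.+1 := inord (v + q).
  have vvq : (vq : nat) = v + q by rewrite inordK.
  have mq : vq %% q = v %% q by rewrite vvq modnDr.
  have bbv : before b v vq by rewrite hb /Bb mq ltnn eqxx vvq /=; lia.
  have adj : forall w, ~~ (before b v w && before b w vq).
    move=> w; rewrite !hb /Bb mq vvq; apply/negP => /andP [h1 h2].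
    have : (w %% q = v %% q) /\ (v < w)%N /\ (w < v + q)%N.
      move: h1 h2; move: (w %% q) (v %% q) (nat_of_ord w) => A B x; case: (ltngtP A B) => //=; lia.
    by case=> e [h3 h4]; apply: (N4 q0 e h3 h4).
  have [hj bj] := adj_pos bbv adj.
  have bj' : b (b^-1%g v) = v by rewrite permKV.
  have lt : (b (b^-1%g v) < b (nxt (b^-1%g v)))%N by rewrite bj bj' vvq; lia.
  have T : Tq q (b (nxt (b^-1%g v))) (b (b^-1%g v)).
    by rewrite bj bj' /Tq vvq; apply/andP; split; lia.
  have fd := swp_f_up hj lt T; rewrite bj bj' in fd.
  have iD : b^-1%g v \in ldesc (@Llt n.+1) b by rewrite inE hj /Llt lt.
  split => //.
  - rewrite fk_mem /=; apply/negP => /and3P [_ h _].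
    by have := sto_asym (sto_before b) bbv; rewrite h.
  - by rewrite -wleb_lt; apply: swp_le (sto_Llt _) iD.
  - exact: swp_neq iD.
have cardc : forall u, u \in U -> #|fk q a| = (#|fk q (c u)|).+1.
  move=> u hu; have [fc m _ _] := Hc u hu.
  by rewrite fc (cardsD1 (inord u.+1, u) (fk q a)) m.
have cardd : forall v, v \in V -> #|fk q (d v)| = (#|fk q b|).+1.
  move=> v hv; have [fd m _ _] := Hd v hv.
  by rewrite fd cardsU1 m.
set S1 := [set cls (@Rk n.+1 q) (c u) | u in U].
set S2 := [set cls (@Rk n.+1 q) (d v) | v in V].
have inj1 : {in U &, injective (fun u => cls (@Rk n.+1 q) (c u))}.
  move=> u u' hu hu' /cls_Rk e.
  have [fc m _ _] := Hc u hu; have [fc' m' _ _] := Hc u' hu'.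
  apply/eqP; apply: contraT => ne.
  have : (inord u.+1, u) \in fk q a :\ (inord u'.+1, u').
    rewrite in_setD1 m andbT; apply: contra ne => /eqP [_ ->] //.
  by rewrite -fc' -e fc in_setD1 eqxx.
have inj2 : {in V &, injective (fun v => cls (@Rk n.+1 q) (d v))}.
  move=> v v' hv hv' /cls_Rk e.
  have [fd m _ _] := Hd v hv; have [fd' m' _ _] := Hd v' hv'.
  have : (inord (v + q), v) \in fk q (d v) by rewrite fd setU11.
  rewrite e fd' in_setU1 (negbTE m) orbF => /eqP [_ ->] //.
have dis : [disjoint S1 & S2].
  apply/pred0P => Y /=; apply/negP => /andP [/imsetP [u hu ->] /imsetP [v hv /cls_Rk e]].
  have := cardc u hu; have := cardd v hv; rewrite -e -fab; lia.
have sub : S1 :|: S2 \subset [set Y | qcover (@Rk n.+1 q) X Y || qcover (@Rk n.+1 q) Y X].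
  apply/subsetP => Y; rewrite !inE => /orP [/imsetP [u hu ->]|/imsetP [v hv ->]].
  - have [_ _ le ne] := Hc u hu.
    apply/orP; right; apply: (cover_of (cls_class _ _) cX _ aX ne le (cardc u hu)).
    by rewrite in_set /Rk.
  - have [_ _ le ne] := Hd v hv.
    apply/orP; left; apply: (cover_of cX (cls_class _ _) bX _ _ le (cardd v hv)).
    + by rewrite in_set /Rk.
    + by rewrite eq_sym.
exists X => //.
have cU := cardU q0 hpq; have cV := @cardV n q.
have e1 : #|S1| = #|U| by rewrite card_in_imset.
have e2 : #|S2| = #|V| by rewrite card_in_imset.
have eU : #|S1 :|: S2| = #|S1| + #|S2|.
  by rewrite cardsU (disjoint_setI0 dis) cards0 subn0.
have := subset_leq_card sub; rewrite /qdeg eU e1 e2 => h.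
rewrite -/U -/V in cU cV; lia.
Qed.

Theorem mainTheorem15 (n : nat) (hn : 1 <= n) :
  (forall R : rel {perm 'I_n}, lattice_congruence R ->
     forall X : {set {perm 'I_n}}, is_class R X ->
       qdeg R X <= 2 * n - ceil_2sqrt n) /\
  (exists R : rel {perm 'I_n}, lattice_congruence R /\
     exists X : {set {perm 'I_n}}, is_class R X /\
       qdeg R X = 2 * n - ceil_2sqrt n).
Proof.
split; first by move=> R hR X cX; exact: part1.
case: n hn => [//|n] hn.
have hc : 4 * n.+1 <= ceil_2sqrt n.+1 * ceil_2sqrt n.+1.
  by rewrite /ceil_2sqrt; case: ex_minnP.
move: hc; set c := ceil_2sqrt n.+1 => hc.
have ec := odd_double_half c.
set p := c./2 in ec *.
set q := c - p.
have q0 : 0 < q.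
  case: (odd c) ec => /= ec; rewrite /q -{1}ec; first lia.
  case: (posnP p) => [p0|]; last lia.
  by move: hc; rewrite -ec p0 /=; lia.
have hpq : n.+1 <= p * q.
  case: (odd c) ec => /= ec.
  - have eq : q = p.+1 by rewrite /q -{1}ec; lia.
    rewrite eq; move: hc; rewrite -ec; nia.
  - have eq : q = p by rewrite /q -{1}ec; lia.
    rewrite eq; move: hc; rewrite -ec; nia.
have [X cX hX] := part2_gen q0 hpq.
have := q0; move=> _.
exists (@Rk n.+1 q); split; first exact: Rk_cong.
exists X; split => //.
apply/eqP; rewrite eqn_leq (part1 hn (@Rk_cong n.+1 q) cX) /=.
have pc : p <= c by rewrite -ec; lia.
move: hX; rewrite -/q; move: (qdeg _ X) => D; lia.
Qed.
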